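(* The loose integration $(\mathcal A,U,\varphi)$ of $m$ symmetric qualitative formalisms $(\mathcal A_1,U,\varphi_1),\dots,(\mathcal A_m,U,\varphi_m)$ over the same set $U$ is a sequential formalism.
   Context: A finite non-associative algebra is a tuple $(\mathcal A,\cup,\neg,\emptyset,\mathcal B,\diamond,\overline{\cdot},e)$ where $(\mathcal A,\cup,\neg,\emptyset,\mathcal B)$ is a finite Boolean algebra (with $x\cap y=\neg(\neg x\cup\neg y)$) and for all $x,y,z$: $\overline{\overline x}=x$, $\overline{x\cup y}=\overline x\cup\overline y$, $\overline{x\diamond y}=\overline y\diamond\overline x$, $e\diamond x=x\diamond e=x$, $x\diamond(y\cup z)=(x\diamond y)\cup(x\diamond z)$, $(x\diamond y)\cap\overline z=\emptyset\iff(y\diamond z)\cap\overline x=\emptyset$. $\mathcal B$ is the universal relation; $r\subseteq r'$ means $r\cup r'=r'$; atoms are the basic relations; $\mathsf B$ denotes the set of atoms. A symmetric qualitative formalism is a triple $(\mathcal A,U,\varphi)$ with $\mathcal A$ a finite non-associative algebra, $U\neq\emptyset$ and $\varphi:\mathcal A\to2^{U\times U}$ with $\varphi(\emptyset)=\emptyset$, $\varphi(\overline r)=\varphi(r)^{-1}$, $\varphi(r\cap r')=\varphi(r)\cap\varphi(r')$, $\varphi(r\cup r')=\varphi(r)\cup\varphi(r')$, $\varphi(r\diamond r')\supseteq(\varphi(r)\circ\varphi(r'))\cap\varphi(\mathcal B)$. A projection operator from $\mathcal A$ to $\mathcal A'$ is a map $\Rsh$ with $\Rsh(r\cup r')=\Rsh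 r\cup\Rsh r'$ and $\Rsh\overline r=\overline{\Rsh r}$. A finite multi-algebra is a product $\mathcal A_1\times\cdots\times\mathcal A_m$ of finite non-associative algebras with projection operators $\Rsh_i^j:\mathcal A_i\to\mathcal A_j$ for all distinct $i,j$. Relations $R=(R_1,\dots,R_m)$; basic if all $R_i$ are atoms; universal relation $\mathcal B=(\mathcal B_1,\dots,\mathcal B_m)$; operations and $\subseteq$ componentwise; $B\in R$ means $B$ basic, $B\subseteq R$. The projection closure $\Rsh R$: repeatedly replace $R_j$ by $R_j\cap\Rsh_i^jR_i$ until a fixed point. A sequential formalism is $(\mathcal A,U,\varphi)$ with $\mathcal A$ a finite multi-algebra, $U\ne\emptyset$, $\varphi:\mathcal A\to 2^{U\times U}$ satisfying $\varphi(\Rsh R)=\varphi(R)$, $\varphi(\overline R)=\varphi(R)^{-1}$, $\varphi((\emptyset,\dots,\emptyset))=\emptyset$, $\varphi(R\diamond R')\supseteq(\varphi(R)\circ\varphi(R'))\cap\varphi(\mathcal B)$, $\varphi(R\cap R')=\varphi(R)\cap\varphi(R')$, $\varphi(R)=\bigcup_{B\in R}\varphi(B)$. The loose integration of $(\mathcal A_1,U,\varphi_1),\dots,(\mathcal A_m,U,\varphi_m)$ is $(\mathcal A,U,\varphi)$ where $\mathcal A$ is the multi-algebra $\mathcal A_1\times\cdots\times\mathcal A_m$ with projections defined on atoms $b\in\mathsf B_i$ by $\Rsh_i^jb=\bigcup\{b'\in\mathsf B_j:\varphi_i(b)\cap\varphi_j(b')\neq\emptyset\}$ (extended to all relations by union),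 and $\varphi(R)=\bigcap_i\varphi_i(R_i)$. *)

(* Defs.v *)
(* Finite Boolean algebras are MathComp's finite complemented
   distributive lattices with top and bottom (finCTBDistrLatticeType). *)
From mathcomp Require Import all_boot all_order.
From mathcomp Require Import boolp.
From Stdlib Require Import Relations.Relation_Operators.

Set Implicit Arguments.
Unset Strict Implicit.
Unset Printing Implicit Defensive.

Import Order.TTheory.
Local Open Scope order_scope.

Record nalgebra := NAlgebra {
  na_disp : Order.disp_t;
  na_sort :> finCTBDistrLatticeType na_disp;
  na_conv : na_sort -> na_sort;
  na_comp : na_sort -> na_sort -> na_sort;
  na_e : na_sort;
  na_convK : forall x, na_conv (na_conv x) = x;
  na_convU : forall x y, na_conv (x `|` y) = na_conv x `|` na_conv y;
  na_convM : forall x y, na_conv (na_comp x y) = na_comp (na_conv y) (na_conv x);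
  na_e_l : forall x, na_comp na_e x = x;
  na_e_r : forall x, na_comp x na_e = x;
  na_compU : forall x y z, na_comp x (y `|` z) = na_comp x y `|` na_comp x z;
  na_cycle : forall x y z,
    ~` (~` (na_comp x y) `|` ~` (na_conv z)) = \bot <->
    ~` (~` (na_comp y z) `|` ~` (na_conv x)) = \bot
}.

Section Ops.
Variable A : nalgebra.
Definition ncup (x y : A) : A := x `|` y.
Definition nneg (x : A) : A := ~` x.
Definition nempty : A := \bot.
Definition nuniv : A := \top.
Definition ncap (x y : A) : A := nneg (ncup (nneg x) (nneg y)).
Definition nsub (x y : A) : Prop := ncup x y = y.
Definition atom (x : A) : Prop :=
  x <> nempty /\ forall y : A, nsub y x -> y = nempty \/ y = x.
End Ops.

Definition brel (U : Type) := U -> U -> Prop.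
Definition req U (P Q : brel U) := forall u v, P u v <-> Q u v.
Definition rsub U (P Q : brel U) := forall u v, P u v -> Q u v.
Definition rempty U : brel U := fun _ _ => False.
Definition rinv U (P : brel U) : brel U := fun u v => P v u.
Definition rcap U (P Q : brel U) : brel U := fun u v => P u v /\ Q u v.
Definition rcup U (P Q : brel U) : brel U := fun u v => P u v \/ Q u v.
Definition rcomp U (P Q : brel U) : brel U := fun u w => exists v, P u v /\ Q v w.

Definition sym_qual_formalism (A : nalgebra) (U : Type) (phi : A -> brel U) : Prop :=
  inhabited U /\
  req (phi (nempty A)) (@rempty U) /\
  (forall r, req (phi (na_conv r)) (rinv (phi r))) /\
  (forall r r', req (phi (ncap r r')) (rcap (phi r) (phi r'))) /\
  (forall r r', req (phi (ncup r r')) (rcup (phi r) (phi r'))) /\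
  (forall r r', rsub (rcap (rcomp (phi r) (phi r')) (phi (nuniv A)))
                     (phi (na_comp r r'))).

Definition projection_op (A A' : nalgebra) (p : A -> A') : Prop :=
  (forall r r', p (ncup r r') = ncup (p r) (p r')) /\
  (forall r, p (na_conv r) = na_conv (p r)).

Section Multi.
Variables (m : nat) (A : 'I_m -> nalgebra).
(* proj i j : projection operator from A_i to A_j (used only for i != j) *)
Definition projs := forall i j : 'I_m, A i -> A j.
Definition mrel := forall i : 'I_m, A i.

Definition finite_multialgebra (proj : projs) : Prop :=
  forall i j, i != j -> projection_op (proj i j).

Definition mcap (R R' : mrel) : mrel := fun i => ncap (R i) (R' i).
Definition mconv (R : mrel) : mrel := fun i => na_conv (R i).
Definition mcomp (R R' : mrel) : mrel := fun i => na_comp (R i) (R' i).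
Definition mempty : mrel := fun i => nempty (A i).
Definition muniv : mrel := fun i => nuniv (A i).
Definition msub (R R' : mrel) : Prop := forall i, nsub (R i) (R' i).
Definition mbasic (R : mrel) : Prop := forall i, atom (R i).

Definition proj_step (proj : projs) (R R' : mrel) : Prop :=
  exists i j, [/\ i != j, R' j = ncap (R j) (proj i j (R i)) &
                  forall k, k != j -> R' k = R k].
Definition proj_fixed (proj : projs) (R : mrel) : Prop :=
  forall i j, i != j -> ncap (R j) (proj i j (R i)) = R j.
Definition proj_closure (proj : projs) (R R' : mrel) : Prop :=
  clos_refl_trans mrel (proj_step proj) R R' /\ proj_fixed proj R'.

Definition sequential_formalism (proj : projs) (U : Type) (phi : mrel -> brel U)
  : Prop :=
  finite_multialgebra proj /\
  inhabited U /\
  (forall R R', proj_closure proj R R' -> req (phi R') (phi R)) /\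
  (forall R, req (phi (mconv R)) (rinv (phi R))) /\
  req (phi mempty) (@rempty U) /\
  (forall R R', rsub (rcap (rcomp (phi R) (phi R')) (phi muniv))
                     (phi (mcomp R R'))) /\
  (forall R R', req (phi (mcap R R')) (rcap (phi R) (phi R'))) /\
  (forall R, req (phi R) (fun u v => exists B, [/\ mbasic B, msub B R & phi B u v])).

Variables (U : Type) (phis : forall i, A i -> brel U).

Definition loose_proj_atom (i j : 'I_m) (b : A i) : A j :=
  \join_(b' : A j | `[< atom b' /\ exists u v, phis b u v /\ phis b' u v >]) b'.
Definition loose_proj : projs := fun i j r =>
  \join_(b : A i | `[< atom b /\ nsub b r >]) @loose_proj_atom i j b.
Definition loose_phi : mrel -> brel U := fun R u v => forall i, phis (R i) u v.
End Multi.

(* Main.v *)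
Require Import Defs.
From mathcomp Require Import all_boot all_order.
From mathcomp Require Import all_boot all_order boolp.
From Stdlib Require Import Relations.Relation_Operators.
Set Implicit Arguments. Unset Strict Implicit.
Import Order.Theory. Local Open Scope order_scope.

Section One.
Variables (A : nalgebra) (U : Type) (phi : A -> brel U).
Hypothesis H : sym_qual_formalism phi.

Lemma nsubE (x y : A) : nsub x y <-> x <= y.
Proof. by rewrite /nsub /ncup leEjoin; split => [->|/eqP]. Qed.

Lemma ncapE (x y : A) : ncap x y = x `&` y.
Proof. by rewrite /ncap /nneg /ncup complU !complK. Qed.

Lemma phi_mono (x y : A) : x <= y -> rsub (phi x) (phi y).
Proof.
move=> /nsubE; rewrite /nsub => E u v P.
case: H => _ [_ [_ [_ [HU _]]]].
by rewrite -E; apply/(HU x y u v); left.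
Qed.

Lemma phi_bot u v : ~ phi \bot u v.
Proof. by case: H => _ [He _] /He. Qed.

Lemma phi_atom_n (n : nat) (r : A) : (#|[pred z : A | (z <= r)%O]| <= n)%N ->
  forall u v, phi r u v -> exists b, [/\ atom b, b <= r & phi b u v].
Proof.
elim: n r => [|n IH] r Hn u v P.
  by move: Hn; rewrite leqn0 => /eqP/card0_eq/(_ r); rewrite inE lexx.
have [Hr|Hr] := boolP (r == \bot).
  by move: P; rewrite (eqP Hr) => /phi_bot.
have [[y [/nsubE yr yb yr']]|Hat] := pselect (exists y, [/\ nsub y r, y <> nempty A & y <> r]).
  have Hs z : z < r -> (#|[pred w : A | (w <= z)%O]| <= n)%N.
    move=> zr; rewrite -ltnS; apply: leq_trans Hn; apply: proper_card.
    apply/properP; split.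
      by apply/subsetP => w; rewrite !inE => wz; apply: le_trans wz (ltW zr).
    by exists r; rewrite !inE ?lexx // lt_geF.
  have E : r = (r `\` y) `|` y by rewrite -[in LHS](joinBI y r) (meet_r yr).
  case: H => _ [_ [_ [_ [HU _]]]].
  have P2 : phi (ncup (r `\` y) y) u v by rewrite /ncup -E.
  move: P2 => /(HU _ _ u v) [P2|P2].
  - have lt1 : r `\` y < r.
      rewrite lt_neqAle leBx andbT; apply/eqP => E2; apply: yb.
      by rewrite /nempty -(diffKI r y) E2 (meet_l yr).
    have [b [ab bl Pb]] := IH _ (Hs _ lt1) u v P2.
    by exists b; split => //; apply: le_trans bl (ltW lt1).
  - have lt1 : y < r by rewrite lt_neqAle yr andbT; apply/eqP.
    have [b [ab bl Pb]] := IH _ (Hs _ lt1) u v P2.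
    by exists b; split => //; apply: le_trans bl (ltW lt1).
exists r; split => //; split; first by move/eqP: Hr.
move=> y ys; case: (pselect (y = nempty A)) => [->|yb]; first by left.
case: (pselect (y = r)) => [->|yr]; first by right.
by exfalso; apply: Hat; exists y.
Qed.

Lemma phi_atom (r : A) u v : phi r u v -> exists b, [/\ atom b, b <= r & phi b u v].
Proof. exact: (@phi_atom_n _ r (leqnn _)). Qed.
End One.

Section Conv.
Variable A : nalgebra.
Lemma conv_mono (x y : A) : x <= y -> na_conv x <= na_conv y.
Proof. by move=> /nsubE; rewrite /nsub /ncup => E; apply/nsubE; rewrite /nsub /ncup -na_convU E. Qed.
Lemma conv_le (x y : A) : (na_conv x <= na_conv y) = (x <= y).
Proof.
apply/idP/idP; last exact: conv_mono.
by move/conv_mono; rewrite !na_convK.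
Qed.
Lemma conv_bot : na_conv (\bot : A) = \bot.
Proof. by apply/eqP; rewrite eq_le le0x andbT -[X in _ <= X]na_convK conv_le le0x. Qed.
Lemma conv_atom (b : A) : atom b -> atom (na_conv b).
Proof.
move=> [b0 Hb]; split.
  by move=> E; apply: b0; rewrite -[b]na_convK E /nempty conv_bot.
move=> y /nsubE yb.
have : nsub (na_conv y) b by apply/nsubE; rewrite -conv_le na_convK.
move/Hb => [E|E].
  by left; rewrite -[y]na_convK E /nempty conv_bot.
by right; rewrite -E na_convK.
Qed.
Lemma atom_leU (b x y : A) : atom b -> b <= x `|` y -> b <= x \/ b <= y.
Proof.
move=> [b0 Hb] bxy.
have E : b = (b `&` x) `|` (b `&` y) by rewrite -meetUr (meet_l bxy).
have : nsub (b `&` x) b by apply/nsubE; exact: leIl.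
move/Hb => [E1|E1].
  right; rewrite E E1 /nempty join0x; exact: leIr.
by left; rewrite -E1; exact: leIr.
Qed.
End Conv.

Unset Implicit Arguments.
Section Main.
Variables (m : nat) (A : 'I_m -> nalgebra) (U : Type) (phis : forall i : 'I_m, A i -> brel U).
Hypothesis HS : forall i, sym_qual_formalism (phis i).

Lemma pa_sup i j (b : A i) (c : A j) (u v : U) : atom c -> phis i b u v -> phis j c u v ->
  c <= loose_proj_atom phis j b.
Proof.
move=> ac P1 P2; rewrite /loose_proj_atom.
apply: (joins_sup (fun c : A j => c)); apply/asboolP; split=> //; by exists u, v.
Qed.

Lemma p_sup i j (b r : A i) : atom b -> b <= r -> loose_proj_atom phis j b <= loose_proj phis j r.
Proof.
move=> ab br; rewrite /loose_proj.
apply: (joins_sup (fun b => loose_proj_atom phis j b)); apply/asboolP; split=> //.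
exact/nsubE.
Qed.

Lemma p_le i j (r : A i) (x : A j) :
  (forall b : A i, atom b -> b <= r -> loose_proj_atom phis j b <= x) ->
  loose_proj phis j r <= x.
Proof.
move=> Hb; apply/joinsP => b /asboolP [ab /nsubE br]; exact: Hb.
Qed.

Lemma pa_le i j (b : A i) (x : A j) :
  (forall (c : A j) (u v : U), atom c -> phis i b u v -> phis j c u v -> c <= x) ->
  loose_proj_atom phis j b <= x.
Proof.
move=> Hc; apply/joinsP => c /asboolP [ac [u [v [P1 P2]]]]; exact: Hc P1 P2.
Qed.

Lemma p_mono i j (r r' : A i) : r <= r' -> loose_proj phis j r <= loose_proj phis j r'.
Proof.
move=> rr; apply: p_le => b ab br; apply: p_sup => //; exact: le_trans br rr.
Qed.

Lemma p_conv_le i j (r : A i) :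
  loose_proj phis j (na_conv r) <= na_conv (loose_proj phis j r).
Proof.
apply: p_le => b ab br; apply: pa_le => c u v ac P1 P2.
rewrite -conv_le na_convK.
have abc := conv_atom ab.
have acc := conv_atom ac.
apply: le_trans (p_sup i j (na_conv b) r abc _); last by rewrite -conv_le na_convK.
apply: (pa_sup i j (na_conv b) (na_conv c) v u) => //.
  case: (HS i) => _ [_ [Hc _]]; apply/Hc; exact: P1.
case: (HS j) => _ [_ [Hc _]]; apply/Hc; exact: P2.
Qed.

Lemma p_proj i j : projection_op (@loose_proj _ _ _ phis i j).
Proof.
split.
  move=> r r'; rewrite /ncup; apply/le_anti/andP; split.
    apply: p_le => b ab /(atom_leU ab) [br|br].
      apply: le_trans (leUl _ _); exact: p_sup.
    apply: le_trans (leUr _ _); exact: p_sup.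
  by rewrite leUx !p_mono ?leUl ?leUr.
move=> r; apply/le_anti/andP; split; first exact: p_conv_le.
have := p_conv_le i j (na_conv r); rewrite na_convK => H.
by rewrite -[X in _ <= X]na_convK conv_le.
Qed.
End Main.

Theorem proposition4p17 (m : nat) (m_gt0 : 0 < m) (A : 'I_m -> nalgebra)
  (U : Type) (phis : forall i : 'I_m, A i -> brel U) :
  (forall i, sym_qual_formalism (phis i)) ->
  sequential_formalism (loose_proj phis) (loose_phi phis).
Proof.
move=> HS.
have HI i (r r' : A i) u v : phis i (ncap r r') u v <-> phis i r u v /\ phis i r' u v.
  by case: (HS i) => _ [_ [_ [H _]]]; apply: H.
have HC i (r : A i) u v : phis i (na_conv r) u v <-> phis i r v u.
  by case: (HS i) => _ [_ [H _]]; apply: H.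
split; first by move=> i j _; exact: (p_proj _ _ _ _ HS).
split; first by case: (HS (Ordinal m_gt0)).
split.
  move=> R R' [Hc _]; elim: Hc => [x y st | x | x y z _ IH1 _ IH2].
  - case: st => i [j [ij Ej Ek]] u v; split => Hy k.
      have [/eqP ->|kj] := boolP (k == j); last by rewrite -Ek.
      apply: (phi_mono (HS j) _ (Hy j)); rewrite Ej ncapE; exact: leIl.
    have [/eqP ->|kj] := boolP (k == j); last by rewrite Ek.
    rewrite Ej; apply/HI; split; first exact: Hy.
    have [b [ab bl Pb]] := phi_atom (HS i) (Hy i).
    have [c [ac cl Pc]] := phi_atom (HS j) (Hy j).
    apply: (phi_mono (HS j) _ Pc).
    exact: le_trans (pa_sup _ _ _ phis i j b c u v ac Pb Pc) (p_sup _ _ _ phis i j b (x i) ab bl).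
  - by move=> u v.
  - by move=> u v; rewrite (IH2 u v) (IH1 u v).
split.
  move=> R u v; split => H i; [apply/HC; exact: H | apply/HC; exact: H].
split.
  move=> u v; split => [/(_ (Ordinal m_gt0))|[]].
  exact: (phi_bot (HS (Ordinal m_gt0))).
split.
  move=> R R' u v [[w [P1 P2]] P3] i.
  case: (HS i) => _ [_ [_ [_ [_ H]]]]; apply: H; split; last exact: P3.
  by exists w; split; [exact: P1 | exact: P2].
split.
  move=> R R' u v; split.
    by move=> H; split => i; have /HI [] := H i.
  by move=> [H1 H2] i; apply/HI; split.
move=> R u v; split.
  move=> H.
  have H' i : exists b, [/\ atom b, b <= R i & phis i b u v] := phi_atom (HS i) (H i).
  exists (fun i => projT1 (cid (H' i))); split.
  - by move=> i; have [] := projT2 (cid (H' i)).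
  - by move=> i; have [_ /nsubE] := projT2 (cid (H' i)).
  - by move=> i; have [] := projT2 (cid (H' i)).
move=> [B [_ HB PB]] i.
apply: (phi_mono (HS i) _ (PB i)); exact/nsubE.
Qed.
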